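(* In the setting below, the map $\psi:W\to\mathbb{R}_+^n$, $\psi(w)=(B_1(w),\dots,B_n(w))$, is injective.
   Context: Setting: $T^*$ is a triangulation of a closed surface $S$ with vertex set $T^0$; $\Sigma=S\setminus N(T^0)$ where $N(T^0)$ is a small open regular disjoint neighborhood of $T^0$; $\Sigma$ has boundary components labeled $1,\dots,n$. $T=T^*\cap\Sigma$ is the ideal triangulation with ideal edges $E$ and ideal faces $F$; $ij$ denotes the ideal edge between boundary components $i,j$ and $ijk$ the ideal face adjacent to boundary components $i,j,k$. $\theta_i^f$ is the length of the side of the right-angled hyperbolic hexagon of face $f=ijk$ (pairwise non-adjacent sides of lengths $l_{ij},l_{jk},l_{ki}$) opposite to the side of length $l_{jk}$, i.e. $\cosh\theta_i^f=\frac{\cosh l_{jk}+\cosh l_{ki}\cosh l_{ij}}{\sinh l_{ki}\sinh l_{ij}}$. Fix $l^0\in\mathbb{R}_+^{|E|}$. $W=\{w\in\mathbb{R}^n: w_i+w_j>-\ln\cosh\frac{l^0_{ij}}{2}\ \forall ij\in E\}$ (admissible discrete conformal factors); for $w\in W$, $\cosh\frac{l_{ij}}{2}=e^{w_i+w_j}\cosh\frac{l^0_{ij}}{2}$, and $B_i(w)=\sum_{f\in F_i}\theta_i^f$, where $F_i$ is the set of faces adjacent to boundary component $i$. *)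

(* Defs.v *)
From mathcomp Require Import all_boot.
From Stdlib Require Import Reals.

Set Implicit Arguments.
Unset Strict Implicit.
Unset Printing Implicit Defensive.

(* ---------- Combinatorial model of a triangulation T^* of a closed surface ----------
   T^* is given as a finite set F of triangles glued pairwise along their sides.
   A corner / side of T^* is a pair (f,k) : F * 'I_3.  Side k of triangle f is the
   side opposite to corner k; its endpoints are corners k+1 and k+2 (mod 3).
   [sigma] : sides -> sides is the gluing (a fixed-point free involution),
   [rev s] says whether the gluing of side s to side (sigma s) matches the endpoints
   (k+1,k+2) with (l+2,l+1) (rev = true) or with (l+1,l+2) (rev = false).
   Edges of T^* (= ideal edges E of T) are the sigma-orbits {s, sigma s}.
   Vertices of T^* (= boundary components of Sigma) are the classes of corners under
   the equivalence generated by the gluing; they are labelled by 'I_n via [vert]. *)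

Definition succ1 (k : 'I_3) : 'I_3 := inord ((k.+1) %% 3).
Definition succ2 (k : 'I_3) : 'I_3 := inord ((k.+2) %% 3).

Section Combinatorics.
Variable F : finType.

Definition sideA (s : F * 'I_3) : F * 'I_3 := (s.1, succ1 s.2).
Definition sideB (s : F * 'I_3) : F * 'I_3 := (s.1, succ2 s.2).

Variable sigma : F * 'I_3 -> F * 'I_3.
Variable rev : F * 'I_3 -> bool.

Definition imA (s : F * 'I_3) := if rev s then sideB (sigma s) else sideA (sigma s).
Definition imB (s : F * 'I_3) := if rev s then sideA (sigma s) else sideB (sigma s).

Definition corner_rel : rel (F * 'I_3) := fun c d =>
  [exists s, ((c == sideA s) && (d == imA s)) || ((c == sideB s) && (d == imB s))].

Definition face_rel : rel F := fun f g => [exists k : 'I_3, (sigma (f, k)).1 == g].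

Definition closed_surface_triangulation (n : nat) (vert : F * 'I_3 -> 'I_n) : Prop :=
  (forall s, sigma (sigma s) = s) /\
  (forall s, sigma s <> s) /\
  (forall s, rev (sigma s) = rev s) /\
  (forall f g : F, connect face_rel f g) /\
  (forall c d, (vert c == vert d) = connect corner_rel c d) /\
  (forall i : 'I_n, exists c, vert c = i).

End Combinatorics.

Open Scope R_scope.

Definition acosh (x : R) : R := ln (x + sqrt (x * x - 1)).

Section Geometry.
Variables (F : finType) (n : nat) (vert : F * 'I_3 -> 'I_n).
Variable l0 : F * 'I_3 -> R.   (* initial length l^0 of the edge containing a side *)

Definition admissible (w : 'I_n -> R) : Prop :=
  forall s : F * 'I_3,
    w (vert (sideA s)) + w (vert (sideB s)) > - ln (cosh (l0 s / 2)).

Definition len (w : 'I_n -> R) (s : F * 'I_3) : R :=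
  2 * acosh (exp (w (vert (sideA s)) + w (vert (sideB s))) * cosh (l0 s / 2)).

(* theta_i^f for corner c = (f,k): the side of the right-angled hexagon opposite
   to the side of length l_{jk}, where jk is the side of f opposite to corner k *)
Definition theta (w : 'I_n -> R) (c : F * 'I_3) : R :=
  let a := len w c in
  let b := len w (sideA c) in
  let d := len w (sideB c) in
  acosh ((cosh a + cosh b * cosh d) / (sinh b * sinh d)).

Definition Bcurv (w : 'I_n -> R) (i : 'I_n) : R :=
  \big[Rplus/0]_(c : F * 'I_3 | vert c == i) theta w c.

End Geometry.

(* Main.v *)
Require Import Defs.
From Stdlib Require Import Reals Lra Psatz FunctionalExtensionality.
From Coquelicot Require Import Coquelicot.
Open Scope R_scope.


Lemma acosh_deriv x : 1 < x -> is_derive acosh x (/ sqrt (x*x-1)).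
Proof.
  intros Hx. unfold acosh.
  assert (Hp : 0 < x*x-1) by nra.
  assert (Hs : 0 < sqrt (x*x-1)) by (apply sqrt_lt_R0; lra).
  auto_derive; replace (x*x + - (1)) with (x*x-1) by ring.
  - repeat split; lra.
  - field. lra.
Qed.

Lemma cosh_deriv x : is_derive cosh x (sinh x).
Proof. unfold cosh, sinh. auto_derive; auto. field. Qed.
Lemma sinh_deriv x : is_derive sinh x (cosh x).
Proof. unfold cosh, sinh. auto_derive; auto. field. Qed.

Lemma acosh_pos X : 1 < X -> 0 < acosh X.
Proof.
  intros H. unfold acosh. rewrite <- ln_1. apply ln_increasing; [lra|].
  assert (0 <= sqrt (X*X-1)) by apply sqrt_pos. lra.
Qed.

Lemma exp2acosh X : 1 < X -> exp (2 * acosh X) = (X + sqrt (X*X-1)) * (X + sqrt (X*X-1)).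
Proof.
  intros H. unfold acosh.
  assert (0 <= sqrt (X*X-1)) by apply sqrt_pos.
  replace (2 * ln (X + sqrt (X * X - 1))) with (ln (X + sqrt (X * X - 1)) + ln (X + sqrt (X * X - 1))) by ring.
  rewrite exp_plus, exp_ln; lra.
Qed.

Lemma coth_y X : 1 < X ->
  X / sqrt (X*X-1) = (exp (2*acosh X) + 1) / (exp (2*acosh X) - 1).
Proof.
  intros H. rewrite exp2acosh by auto.
  set (s := sqrt (X*X-1)).
  assert (Hs : 0 < s) by (apply sqrt_lt_R0; nra).
  assert (Hss : s * s = X*X-1) by (apply sqrt_sqrt; nra).
  assert (E: (X + s) * (X + s) - 1 = 2*s*(X+s)) by nra.
  rewrite E. field_simplify_eq. 2: { split; nra. }
  nra.
Qed.

Lemma len_deriv (g : R -> R) k t b :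
  is_derive g t b -> 1 < exp (g t) * k ->
  is_derive (fun t => 2 * acosh (exp (g t) * k)) t
    (2 * b * ((exp (2 * acosh (exp (g t) * k)) + 1) / (exp (2 * acosh (exp (g t) * k)) - 1))).
Proof.
  intros Hg HX.
  set (X := exp (g t) * k) in *.
  assert (HX' : is_derive (fun t => exp (g t) * k) t (b * X)).
  { auto_derive. exists b; exact Hg.
    replace (Derive (fun x => g x) t) with b. unfold X; ring.
    symmetry; apply is_derive_unique; exact Hg. }
  assert (Hc := is_derive_comp acosh (fun t => exp (g t) * k) t _ _ (acosh_deriv X HX) HX').
  apply (is_derive_scal (fun t => acosh (exp (g t) * k)) t 2 _) in Hc.
  replace (2 * b * ((exp (2 * acosh X) + 1) / (exp (2 * acosh X) - 1)))
    with (2 * scal (b * X) (/ sqrt (X * X - 1))); [exact Hc|].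
  rewrite <- coth_y by auto. unfold scal; simpl; unfold mult; simpl.
  field. apply Rgt_not_eq, sqrt_lt_R0. nra.
Qed.

Lemma ch_sh x : cosh x * cosh x - sinh x * sinh x = 1.
Proof. unfold cosh, sinh. rewrite exp_Ropp. field. apply Rgt_not_eq, exp_pos. Qed.

Lemma sinh_pos x : 0 < x -> 0 < sinh x.
Proof. intros. unfold sinh. rewrite exp_Ropp.
  assert (1 < exp x) by (rewrite <- exp_0; apply exp_increasing; lra).
  assert (0 < / exp x < 1). { split. apply Rinv_0_lt_compat; lra.
    rewrite <- Rinv_1. apply Rinv_lt_contravar; lra. } lra. Qed.

Lemma cosh_gt_sinh x : sinh x < cosh x.
Proof. unfold cosh, sinh. assert (0 < exp (-x)) by apply exp_pos. lra. Qed.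

Lemma cosh_ge1 x : 1 <= cosh x.
Proof. assert (H := ch_sh x). assert (0 < cosh x) by (unfold cosh; assert (0 < exp x) by apply exp_pos; assert (0 < exp (-x)) by apply exp_pos; lra). nra. Qed.

Definition Mv ca cb cc sa sb sc da db dc :=
  ((sa*da + sb*db*cc + cb*sc*dc) * (sb*sc) - (ca + cb*cc) * (cb*db*sc + sb*cc*dc)) / (sb*sc).
Definition Gv ca cb cc := ca*ca + cb*cb + cc*cc + 2*ca*cb*cc - 1.

Lemma is_derive_val (f : R -> R) t l l' : is_derive f t l -> l = l' -> is_derive f t l'.
Proof. intros H ->; exact H. Qed.

Lemma corner_deriv (la lb lc : R -> R) t da db dc :
  is_derive la t da -> is_derive lb t db -> is_derive lc t dc ->
  0 < la t -> 0 < lb t -> 0 < lc t ->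
  is_derive (fun t => acosh ((cosh (la t) + cosh (lb t) * cosh (lc t)) / (sinh (lb t) * sinh (lc t)))) t
    (Mv (cosh (la t)) (cosh (lb t)) (cosh (lc t)) (sinh (la t)) (sinh (lb t)) (sinh (lc t)) da db dc
      / sqrt (Gv (cosh (la t)) (cosh (lb t)) (cosh (lc t)))).
Proof.
  intros Ha Hb Hc pa pb pc.
  assert (Ca := is_derive_comp cosh la t _ _ (cosh_deriv _) Ha).
  assert (Cb := is_derive_comp cosh lb t _ _ (cosh_deriv _) Hb).
  assert (Cc := is_derive_comp cosh lc t _ _ (cosh_deriv _) Hc).
  assert (Sb := is_derive_comp sinh lb t _ _ (sinh_deriv _) Hb).
  assert (Sc := is_derive_comp sinh lc t _ _ (sinh_deriv _) Hc).
  assert (N := is_derive_plus _ _ _ _ _ Ca (is_derive_mult _ _ _ _ _ Cb Cc ltac:(intros; apply Rmult_comm))).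
  assert (D := is_derive_mult _ _ _ _ _ Sb Sc ltac:(intros; apply Rmult_comm)).
  set (ca := cosh (la t)) in *. set (cb := cosh (lb t)) in *. set (cc := cosh (lc t)) in *.
  set (sa := sinh (la t)) in *. set (sb := sinh (lb t)) in *. set (sc := sinh (lc t)) in *.
  assert (hsb : 0 < sb) by (apply sinh_pos; auto).
  assert (hsc : 0 < sc) by (apply sinh_pos; auto).
  assert (hcb : sb < cb) by apply cosh_gt_sinh.
  assert (hcc : sc < cc) by apply cosh_gt_sinh.
  assert (hca : 1 <= ca) by apply cosh_ge1.
  assert (eb : cb*cb - sb*sb = 1) by apply ch_sh.
  assert (ec : cc*cc - sc*sc = 1) by apply ch_sh.
  assert (Dn0 : sb * sc <> 0) by nra.
  assert (Q := is_derive_div _ _ _ _ _ N D Dn0). simpl in Q.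
  set (R0 := (ca + cb * cc) / (sb * sc)) in *.
  assert (HR : 1 < R0).
  { unfold R0. apply (Rmult_lt_reg_r (sb*sc)); [nra|]. unfold Rdiv; rewrite Rmult_1_l, Rmult_assoc, Rinv_l, Rmult_1_r by exact Dn0. nra. }
  assert (Z := is_derive_comp acosh (fun t => (cosh (la t) + cosh (lb t) * cosh (lc t)) / (sinh (lb t) * sinh (lc t))) t _ _ (acosh_deriv R0 HR) Q).
  eapply is_derive_val; [exact Z|].
  assert (hcb1 : 1 <= cb) by apply cosh_ge1.
  assert (hcc1 : 1 <= cc) by apply cosh_ge1.
  assert (HG : 0 < Gv ca cb cc).
  { unfold Gv. assert (1 <= ca*cb) by nra. assert (1 <= ca*cb*cc) by nra. nra. }
  assert (E1 : R0 * R0 - 1 = Rsqr (sqrt (Gv ca cb cc) / (sb * sc))).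
  { rewrite Rsqr_div' , Rsqr_sqrt by lra. unfold R0, Gv, Rsqr.
    field_simplify_eq; [|nra].
    assert (E : forall a, a = 0 -> a = 0) by auto. nra. }
  rewrite E1, sqrt_Rsqr.
  2: { apply Rlt_le, Rdiv_lt_0_compat; [apply sqrt_lt_R0; lra | nra]. }
  unfold scal; simpl; unfold mult, plus; simpl. unfold Mv.
  fold ca cb cc sa sb sc. field. assert (0 < sqrt (Gv ca cb cc)) by (apply sqrt_lt_R0; lra). repeat split; nra.
Qed.

Definition chy y := (y + / y) / 2.
Definition shy y := (y - / y) / 2.
Definition dy y s := 2 * s * ((y + 1) / (y - 1)).

Lemma face_identity y0 y1 y2 U0 U1 U2 :
  1 < y0 -> 1 < y1 -> 1 < y2 ->
  let s0 := U1 + U2 in let s1 := U2 + U0 in let s2 := U0 + U1 in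
  let p0 := chy y0 - 1 in let p1 := chy y1 - 1 in let p2 := chy y2 - 1 in
  U0 * Mv (chy y0) (chy y1) (chy y2) (shy y0) (shy y1) (shy y2) (dy y0 s0) (dy y1 s1) (dy y2 s2)
  + U1 * Mv (chy y1) (chy y2) (chy y0) (shy y1) (shy y2) (shy y0) (dy y1 s1) (dy y2 s2) (dy y0 s0)
  + U2 * Mv (chy y2) (chy y0) (chy y1) (shy y2) (shy y0) (shy y1) (dy y2 s2) (dy y0 s0) (dy y1 s1)
  = 2 * (2 * (2 * (U0*U1 + U1*U2 + U2*U0)) - 2 * (p0*U0*U0 + p1*U1*U1 + p2*U2*U2)
         - (2 + p0 + p1 + p2) * (s0*s0/p0 + s1*s1/p1 + s2*s2/p2)).
Proof.
  intros h0 h1 h2 s0 s1 s2 p0 p1 p2.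
  unfold Mv, chy, shy, dy, p0, p1, p2, s0, s1, s2.
  unfold chy. field. repeat split; try lra. all: intro; nra.
Qed.

Lemma F_bound p0 p1 p2 U0 U1 U2 : 0 < p0 -> 0 < p1 -> 0 < p2 ->
  let s0 := U1 + U2 in let s1 := U2 + U0 in let s2 := U0 + U1 in
  2 * (2 * (U0*U1 + U1*U2 + U2*U0)) - 2 * (p0*U0*U0 + p1*U1*U1 + p2*U2*U2)
         - (2 + p0 + p1 + p2) * (s0*s0/p0 + s1*s1/p1 + s2*s2/p2)
  <= - 2 * (p0*U0*U0 + p1*U1*U1 + p2*U2*U2).
Proof.
  intros h0 h1 h2 s0 s1 s2.
  assert (k : forall p s, 0 < p -> p <= 2 + p0 + p1 + p2 -> s * s <= (2 + p0 + p1 + p2) * (s * s / p)).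
  { intros p s hp hq. replace ((2 + p0 + p1 + p2) * (s * s / p)) with ((2 + p0 + p1 + p2) / p * (s*s)) by (field; lra).
    assert (1 <= (2 + p0 + p1 + p2) / p).
    { apply (Rmult_le_reg_r p); auto. unfold Rdiv. rewrite Rmult_assoc, Rinv_l, Rmult_1_r by (apply Rgt_not_eq; lra). lra. }
    assert (0 <= s*s) by nra. nra. }
  assert (k0 := k p0 s0 h0 ltac:(lra)).
  assert (k1 := k p1 s1 h1 ltac:(lra)).
  assert (k2 := k p2 s2 h2 ltac:(lra)).
  rewrite Rmult_plus_distr_l, Rmult_plus_distr_l.
  unfold s0, s1, s2 in *.
  assert (0 <= (U0-U1)*(U0-U1) + (U1-U2)*(U1-U2) + (U2-U0)*(U2-U0)) by (pose proof (Rle_0_sqr (U0-U1)); pose proof (Rle_0_sqr (U1-U2)); pose proof (Rle_0_sqr (U2-U0)); unfold Rsqr in *; lra).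
  nra.
Qed.

Definition Th (la lb lc : R -> R) t :=
  acosh ((cosh (la t) + cosh (lb t) * cosh (lc t)) / (sinh (lb t) * sinh (lc t))).

Lemma cosh_chy x : cosh x = chy (exp x).
Proof. unfold cosh, chy. rewrite exp_Ropp. reflexivity. Qed.
Lemma sinh_shy x : sinh x = shy (exp x).
Proof. unfold sinh, shy. rewrite exp_Ropp. reflexivity. Qed.

Lemma chy_p y : 1 < y -> 0 < chy y - 1.
Proof. intros. unfold chy.
  replace ((y + / y) / 2 - 1) with ((y-1)*(y-1)/(2*y)) by (field; lra).
  apply Rdiv_lt_0_compat; nra. Qed.

Lemma exp_gt1 x : 0 < x -> 1 < exp x.
Proof. intros; rewrite <- exp_0; apply exp_increasing; lra. Qed.

Lemma face_step (L0 L1 L2 : R -> R) U0 U1 U2 :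
  (forall t, 0 <= t <= 1 -> 0 < L0 t /\ is_derive L0 t (2*(U1+U2)*((exp (L0 t)+1)/(exp (L0 t) - 1)))) ->
  (forall t, 0 <= t <= 1 -> 0 < L1 t /\ is_derive L1 t (2*(U2+U0)*((exp (L1 t)+1)/(exp (L1 t) - 1)))) ->
  (forall t, 0 <= t <= 1 -> 0 < L2 t /\ is_derive L2 t (2*(U0+U1)*((exp (L2 t)+1)/(exp (L2 t) - 1)))) ->
  let h t := U0 * Th L0 L1 L2 t + U1 * Th L1 L2 L0 t + U2 * Th L2 L0 L1 t in
  h 1 - h 0 <= 0 /\ (~ (U0 = 0 /\ U1 = 0 /\ U2 = 0) -> h 1 - h 0 < 0).
Proof.
  intros H0 H1 H2 h.
  set (dd := fun (L : R -> R) s t => 2*s*((exp (L t)+1)/(exp (L t) - 1))).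
  set (Md := fun (La Lb Lc : R -> R) sa sb sc t =>
     Mv (cosh (La t)) (cosh (Lb t)) (cosh (Lc t)) (sinh (La t)) (sinh (Lb t)) (sinh (Lc t))
        (dd La sa t) (dd Lb sb t) (dd Lc sc t) / sqrt (Gv (cosh (La t)) (cosh (Lb t)) (cosh (Lc t)))).
  set (h' := fun t => U0 * Md L0 L1 L2 (U1+U2) (U2+U0) (U0+U1) t
                    + U1 * Md L1 L2 L0 (U2+U0) (U0+U1) (U1+U2) t
                    + U2 * Md L2 L0 L1 (U0+U1) (U1+U2) (U2+U0) t).
  assert (Hd : forall t, 0 <= t <= 1 -> derivable_pt_lim h t (h' t)).
  { intros t ht. apply is_derive_Reals.
    destruct (H0 t ht) as [a0 d0]. destruct (H1 t ht) as [a1 d1]. destruct (H2 t ht) as [a2 d2].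
    assert (c0 := corner_deriv L0 L1 L2 t _ _ _ d0 d1 d2 a0 a1 a2).
    assert (c1 := corner_deriv L1 L2 L0 t _ _ _ d1 d2 d0 a1 a2 a0).
    assert (c2 := corner_deriv L2 L0 L1 t _ _ _ d2 d0 d1 a2 a0 a1).
    apply (is_derive_scal _ _ U0) in c0.
    apply (is_derive_scal _ _ U1) in c1.
    apply (is_derive_scal _ _ U2) in c2.
    assert (S := is_derive_plus _ _ _ _ _ (is_derive_plus _ _ _ _ _ c0 c1) c2).
    exact S. }
  destruct (MVT_cor2 h h' 0 1 ltac:(lra) Hd) as [c [Hc Hcr]].
  rewrite Hc, Rminus_0_r, Rmult_1_r.
  assert (hc : 0 <= c <= 1) by lra.
  destruct (H0 c hc) as [a0 _]. destruct (H1 c hc) as [a1 _]. destruct (H2 c hc) as [a2 _].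
  assert (y0 := exp_gt1 _ a0). assert (y1 := exp_gt1 _ a1). assert (y2 := exp_gt1 _ a2).
  unfold h', Md, dd. rewrite !cosh_chy, !sinh_shy.
  set (e0 := exp (L0 c)) in *. set (e1 := exp (L1 c)) in *. set (e2 := exp (L2 c)) in *.
  fold (dy e0 (U1+U2)) (dy e1 (U2+U0)) (dy e2 (U0+U1)).
  replace (Gv (chy e1) (chy e2) (chy e0)) with (Gv (chy e0) (chy e1) (chy e2)) by (unfold Gv; ring).
  replace (Gv (chy e2) (chy e0) (chy e1)) with (Gv (chy e0) (chy e1) (chy e2)) by (unfold Gv; ring).
  set (G := Gv (chy e0) (chy e1) (chy e2)).
  assert (q0 := chy_p _ y0). assert (q1 := chy_p _ y1). assert (q2 := chy_p _ y2).
  assert (HG : 0 < sqrt G).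
  { apply sqrt_lt_R0. unfold G, Gv.
    assert (1 <= chy e0 * chy e1) by nra. assert (1 <= chy e0 * chy e1 * chy e2) by nra. nra. }
  unfold Rdiv.
  match goal with |- context [?a * (?x * / sqrt G) + ?b * (?y * / sqrt G) + ?c * (?z * / sqrt G)] =>
    replace (a * (x * / sqrt G) + b * (y * / sqrt G) + c * (z * / sqrt G)) with ((a*x + b*y + c*z) / sqrt G) by (field; lra) end.
  rewrite face_identity by auto.
  assert (FB := F_bound _ _ _ U0 U1 U2 q0 q1 q2). simpl in FB.
  match type of FB with ?F <= _ => set (FF := F) in * end.
  assert (iG : 0 < / sqrt G) by (apply Rinv_0_lt_compat; lra).
  assert (Sp : 0 <= (chy e0 - 1) * U0 * U0 + (chy e1 - 1) * U1 * U1 + (chy e2 - 1) * U2 * U2).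
  { assert (0 <= (chy e0 - 1) * (U0 * U0)) by (apply Rmult_le_pos; nra).
    assert (0 <= (chy e1 - 1) * (U1 * U1)) by (apply Rmult_le_pos; nra).
    assert (0 <= (chy e2 - 1) * (U2 * U2)) by (apply Rmult_le_pos; nra). nra. }
  unfold Rdiv. split.
  - nra.
  - intros NZ.
    assert (Sp' : 0 < (chy e0 - 1) * U0 * U0 + (chy e1 - 1) * U1 * U1 + (chy e2 - 1) * U2 * U2).
    { destruct (Req_dec U0 0) as [z0|z0]; [destruct (Req_dec U1 0) as [z1|z1]; [destruct (Req_dec U2 0) as [z2|z2]|]|].
      - exfalso; tauto.
      - assert (0 < (chy e2 - 1) * (U2 * U2)) by (apply Rmult_lt_0_compat; [lra| nra]). nra.
      - assert (0 < (chy e1 - 1) * (U1 * U1)) by (apply Rmult_lt_0_compat; [lra| nra]). nra.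
      - assert (0 < (chy e0 - 1) * (U0 * U0)) by (apply Rmult_lt_0_compat; [lra| nra]). nra. }
    nra.
Qed.

Lemma edge_gen (wa wb wa' wb' k t : R) : 0 < k -> wa + wb > - ln k -> wa' + wb' > - ln k -> 0 <= t <= 1 ->
  0 < 2 * acosh (exp ((wa + t*(wa'-wa)) + (wb + t*(wb'-wb))) * k) /\
  is_derive (fun t => 2 * acosh (exp ((wa + t*(wa'-wa)) + (wb + t*(wb'-wb))) * k)) t
   (2*((wa'-wa)+(wb'-wb))*((exp (2 * acosh (exp ((wa + t*(wa'-wa)) + (wb + t*(wb'-wb))) * k)) + 1)
        / (exp (2 * acosh (exp ((wa + t*(wa'-wa)) + (wb + t*(wb'-wb))) * k)) - 1))).
Proof.
  intros hk h1 h2 ht.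
  set (g := fun t => (wa + t*(wa'-wa)) + (wb + t*(wb'-wb))).
  assert (Hg : is_derive g t ((wa'-wa)+(wb'-wb))).
  { unfold g. auto_derive; [auto | ring]. }
  assert (Hgt : g t > - ln k).
  { unfold g. assert (0 <= t * (wa' + wb' + ln k)) by (apply Rmult_le_pos; lra).
    assert (0 <= (1-t) * (wa + wb + ln k)) by (apply Rmult_le_pos; lra).
    destruct (Req_dec t 0) as [->|tn]; [lra|].
    assert (0 < t * (wa' + wb' + ln k)) by (apply Rmult_lt_0_compat; lra). nra. }
  assert (HX : 1 < exp (g t) * k).
  { assert (exp (- ln k) < exp (g t)) by (apply exp_increasing; lra).
    rewrite exp_Ropp, exp_ln in H by auto.
    apply (Rmult_lt_compat_r k) in H; auto. rewrite Rinv_l in H; lra. }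
  split.
  - assert (0 < acosh (exp (g t) * k)) by (apply acosh_pos; auto). unfold g in *. lra.
  - exact (len_deriv g k t _ Hg HX).
Qed.

From HB Require Import structures.
From mathcomp Require Import all_boot.
Open Scope R_scope.

HB.instance Definition _ := Monoid.isComLaw.Build R 0 Rplus
  (fun a b c => esym (Rplus_assoc a b c)) Rplus_comm Rplus_0_l.

Definition k0 : 'I_3 := ord0.
Definition k1 : 'I_3 := lift ord0 ord0.
Definition k2 : 'I_3 := lift ord0 (lift ord0 ord0).
Lemma s1_0 : succ1 k0 = k1. Proof. apply: val_inj. by rewrite /= inordK. Qed.
Lemma s2_0 : succ2 k0 = k2. Proof. apply: val_inj. by rewrite /= inordK. Qed.
Lemma s1_1 : succ1 k1 = k2. Proof. apply: val_inj. by rewrite /= inordK. Qed.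
Lemma s2_1 : succ2 k1 = k0. Proof. apply: val_inj. by rewrite /= inordK. Qed.
Lemma s1_2 : succ1 k2 = k0. Proof. apply: val_inj. by rewrite /= inordK. Qed.
Lemma s2_2 : succ2 k2 = k1. Proof. apply: val_inj. by rewrite /= inordK. Qed.

Lemma big_Rmult a (I : Type) (r : seq I) (P : pred I) (G : I -> R) :
  a * \big[Rplus/0]_(i <- r | P i) G i = \big[Rplus/0]_(i <- r | P i) (a * G i).
Proof.
  by rewrite (big_morph (fun x => a * x) (fun x y => Rmult_plus_distr_l a x y) (Rmult_0_r a)).
Qed.

Lemma sumB (I : finType) (G H : I -> R) :
  \big[Rplus/0]_i G i - \big[Rplus/0]_i H i = \big[Rplus/0]_i (G i - H i).
Proof.
  rewrite /Rminus big_split /=.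
  by rewrite (big_morph Ropp Ropp_plus_distr Ropp_0).
Qed.

Lemma sum_neg (I : finType) (d : I -> R) j :
  (forall i, d i <= 0) -> d j < 0 -> \big[Rplus/0]_i d i < 0.
Proof.
  move=> Hle Hlt. rewrite (bigD1 j) //=.
  have : \big[Rplus/0]_(i | i != j) d i <= 0.
    apply: (big_ind (fun x => x <= 0)) => //; [lra | move=> x y; lra].
  lra.
Qed.

Section Main.
Variables (n : nat) (F : finType) (vert : F * 'I_3 -> 'I_n) (l0 : F * 'I_3 -> R).

Lemma B_sum (w0 u : 'I_n -> R) :
  \big[Rplus/0]_i (u i * Bcurv vert l0 w0 i)
  = \big[Rplus/0]_(c : F * 'I_3) (u (vert c) * theta vert l0 w0 c).
Proof.
  rewrite (partition_big vert xpredT) //=.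
  apply: eq_bigr => i _. rewrite /Bcurv big_Rmult. by apply: eq_bigr => c /eqP ->.
Qed.

Lemma face_split (G : F * 'I_3 -> R) :
  \big[Rplus/0]_(c : F * 'I_3) G c
  = \big[Rplus/0]_(f : F) (G (f,k0) + G (f,k1) + G (f,k2)).
Proof.
  transitivity (\big[Rplus/0]_(p : F * 'I_3) G (p.1, p.2)).
    by apply: eq_bigr => -[f k].
  rewrite -(pair_bigA _ (fun f k => G (f,k))).
  apply: eq_bigr => f _. rewrite !big_ord_recl big_ord0 /k0 /k1 /k2 /=. lra.
Qed.


Lemma face_diff (w w' : 'I_n -> R) f : admissible vert l0 w -> admissible vert l0 w' ->
  let U := fun k => w' (vert (f,k)) - w (vert (f,k)) in
  let d := (U k0 * theta vert l0 w' (f,k0) + U k1 * theta vert l0 w' (f,k1) + U k2 * theta vert l0 w' (f,k2))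
         - (U k0 * theta vert l0 w (f,k0) + U k1 * theta vert l0 w (f,k1) + U k2 * theta vert l0 w (f,k2)) in
  d <= 0 /\ (~ (U k0 = 0 /\ U k1 = 0 /\ U k2 = 0) -> d < 0).
Proof.
  move=> Hw Hw' U d.
  pose wt := fun t i => w i + t * (w' i - w i).
  pose L := fun (k : 'I_3) t => len vert l0 (wt t) (f,k).
  have HL : forall k t, 0 <= t <= 1 -> 0 < L k t /\ is_derive (L k) t
     (2*((w' (vert (f, succ1 k)) - w (vert (f, succ1 k))) + (w' (vert (f, succ2 k)) - w (vert (f, succ2 k))))
       *((exp (L k t)+1)/(exp (L k t) - 1))).
  { move=> k t ht. have hk : 0 < cosh (l0 (f,k) / 2) by have := cosh_ge1 (l0 (f,k)/2); lra.
    exact: (edge_gen _ _ _ _ _ t hk (Hw (f,k)) (Hw' (f,k)) ht). }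
  have H0 : forall t, 0 <= t <= 1 -> 0 < L k0 t /\ is_derive (L k0) t (2*(U k1 + U k2)*((exp (L k0 t)+1)/(exp (L k0 t) - 1))).
    by move=> t ht; have := HL k0 t ht; rewrite s1_0 s2_0.
  have H1 : forall t, 0 <= t <= 1 -> 0 < L k1 t /\ is_derive (L k1) t (2*(U k2 + U k0)*((exp (L k1 t)+1)/(exp (L k1 t) - 1))).
    by move=> t ht; have := HL k1 t ht; rewrite s1_1 s2_1.
  have H2 : forall t, 0 <= t <= 1 -> 0 < L k2 t /\ is_derive (L k2) t (2*(U k0 + U k1)*((exp (L k2 t)+1)/(exp (L k2 t) - 1))).
    by move=> t ht; have := HL k2 t ht; rewrite s1_2 s2_2.
  have := face_step _ _ _ _ _ _ H0 H1 H2.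
  have T0 : forall t, Th (L k0) (L k1) (L k2) t = theta vert l0 (wt t) (f,k0).
    by move=> t; rewrite /Th /L /theta /sideA /sideB /= s1_0 s2_0.
  have T1 : forall t, Th (L k1) (L k2) (L k0) t = theta vert l0 (wt t) (f,k1).
    by move=> t; rewrite /Th /L /theta /sideA /sideB /= s1_1 s2_1.
  have T2 : forall t, Th (L k2) (L k0) (L k1) t = theta vert l0 (wt t) (f,k2).
    by move=> t; rewrite /Th /L /theta /sideA /sideB /= s1_2 s2_2.
  have W1 : wt 1 = w' by apply: functional_extensionality => i; rewrite /wt; lra.
  have W0 : wt 0 = w by apply: functional_extensionality => i; rewrite /wt; lra.
  rewrite /= !T0 !T1 !T2 W1 W0. done.
Qed.

End Main.

Theorem proposition3p3 (n : nat) (F : finType)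
    (sigma : F * 'I_3 -> F * 'I_3) (rev : F * 'I_3 -> bool)
    (vert : F * 'I_3 -> 'I_n) (l0 : F * 'I_3 -> R) :
  closed_surface_triangulation sigma rev vert ->
  (forall s, 0 < l0 s) ->
  (forall s, l0 (sigma s) = l0 s) ->
  forall w w' : 'I_n -> R,
    admissible vert l0 w -> admissible vert l0 w' ->
    (forall i, Bcurv vert l0 w i = Bcurv vert l0 w' i) ->
    w = w'.
Proof.
  move=> [_ [_ [_ [_ [_ Hsurj]]]]] _ _ w w' Hw Hw' HB.
  apply: functional_extensionality => i0.
  case: (Req_dec (w i0) (w' i0)) => // Hne. exfalso.
  pose u := fun i => w' i - w i.
  pose hf := fun (w0 : 'I_n -> R) (f : F) =>
    u (vert (f,k0)) * theta vert l0 w0 (f,k0) + u (vert (f,k1)) * theta vert l0 w0 (f,k1)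
    + u (vert (f,k2)) * theta vert l0 w0 (f,k2).
  have E : forall w0, \big[Rplus/0]_i (u i * Bcurv vert l0 w0 i) = \big[Rplus/0]_(f : F) hf w0 f.
    by move=> w0; rewrite B_sum face_split.
  have E0 : \big[Rplus/0]_(f : F) hf w' f - \big[Rplus/0]_(f : F) hf w f = 0.
    rewrite -!E. have -> : \big[Rplus/0]_i (u i * Bcurv vert l0 w' i) = \big[Rplus/0]_i (u i * Bcurv vert l0 w i).
      by apply: eq_bigr => i _; rewrite HB.
    lra.
  move: E0; rewrite sumB.
  have [c Hc] := Hsurj i0.
  case: c Hc => f k Hc.
  suff : \big[Rplus/0]_(f0 : F) (hf w' f0 - hf w f0) < 0 by lra.
  apply: (@sum_neg F (fun f0 => hf w' f0 - hf w f0) f).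
  - move=> f0. by case: (face_diff n F vert l0 w w' f0 Hw Hw').
  - case: (face_diff n F vert l0 w w' f Hw Hw') => _; apply.
    have uk : u (vert (f,k)) <> 0 by rewrite /u Hc; lra.
    move=> [a0 [a1 a2]]. apply: uk.
    have : k = k0 \/ k = k1 \/ k = k2.
      case: k {Hc} => -[|[|[|m]]] hm.
      + by left; apply: val_inj.
      + by right; left; apply: val_inj.
      + by right; right; apply: val_inj.
      + by [].
    by case=> [->|[->|->]].
Qed.
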